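(* Let $\mathcal{U}$ be an update family on $\mathbb{Z}$ for which $-1$ is a stable direction (i.e. no $X\in\mathcal{U}$ satisfies $X\subset\{1,2,3,\dots\}$). Then for every $n\in\mathbb{N}$, every $\Lambda\subset\mathbb{Z}$ with $\{-r(2^n-1),\dots,rn2^{n-1}\}\subset\Lambda$, and every $\eta\in V(n,\Lambda)$, one has $\eta_0=1$.
   Context: An update family is a set $\mathcal{U}$ of finitely many finite nonempty subsets of $\mathbb{Z}\setminus\{0\}$, and $r=\max\{|x-y| : x,y\in X\cup\{0\}, X\in\mathcal{U}\}$. For $\Lambda\subset\mathbb{Z}$, configurations are elements of $\{0,1\}^\Lambda$; $1_\Lambda$ is the all-ones configuration; $\eta^s$ is $\eta$ with the state at $s$ flipped. A move from $\eta$ to $\eta'$ is legal if $\eta'=\eta$, or $\eta'=\eta^s$ for some $s\in\Lambda$ and some $X\in\mathcal{U}$ has all sites of $s+X$ in state $0$ in the configuration equal to $\eta$ on $\Lambda$ and $0$ outside $\Lambda$. A legal path is a finite sequence $(\eta^j)_{0\le j\le m}$, $m\ge1$, with all consecutive moves legal; it is $n$-legal if every $\eta^j$ has at most $n$ zeroes in $\Lambda$. $V(n,\Lambda)$ is the set of configurations reachable from $1_\Lambda$ by an $n$-legal path. *)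

(* Defs.v *)
From Stdlib Require Import ZArith List Lia.
Import ListNotations.
Open Scope Z_scope.

Definition update_family := list (list Z).

Definition is_update_family (U : update_family) : Prop :=
  forall X, In X U -> X <> [] /\ ~ In 0 X.

(* r = max { |x - y| : x, y in X u {0}, X in U }  (0 if U is empty). *)
Definition range_of_set (X : list Z) : Z :=
  fold_right Z.max 0
    (flat_map (fun x => map (fun y => Z.abs (x - y)) (0 :: X)) (0 :: X)).

Definition range_r (U : update_family) : Z :=
  fold_right Z.max 0 (map range_of_set U).

(* Sites: Lam : Z -> Prop is the (possibly infinite) set Lambda.
   Configurations: eta : Z -> bool, only values on Lam matter
   (true = state 1, false = state 0). *)
Definition config := Z -> bool.

Definition conf_eq (Lam : Z -> Prop) (eta eta' : config) : Prop :=
  forall x, Lam x -> eta x = eta' x.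

(* Site x is in state 0 in the configuration equal to eta on Lam and 0 outside. *)
Definition zero_ext (Lam : Z -> Prop) (eta : config) (x : Z) : Prop :=
  (Lam x /\ eta x = false) \/ ~ Lam x.

Definition is_flip (Lam : Z -> Prop) (eta eta' : config) (s : Z) : Prop :=
  eta' s = negb (eta s) /\ forall x, Lam x -> x <> s -> eta' x = eta x.

Definition legal_move (U : update_family) (Lam : Z -> Prop) (eta eta' : config) : Prop :=
  conf_eq Lam eta eta' \/
  exists s, Lam s /\ is_flip Lam eta eta' s /\
    exists X, In X U /\ forall x, In x X -> zero_ext Lam eta (s + x).

Definition at_most_zeroes (Lam : Z -> Prop) (n : nat) (eta : config) : Prop :=
  exists l : list Z, (length l <= n)%nat /\
    forall x, Lam x -> eta x = false -> In x l.

Definition V (U : update_family) (n : nat) (Lam : Z -> Prop) (eta : config) : Prop :=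
  exists (m : nat) (p : nat -> config),
    (1 <= m)%nat /\
    conf_eq Lam (p 0%nat) (fun _ => true) /\
    conf_eq Lam (p m) eta /\
    (forall j, (j < m)%nat -> legal_move U Lam (p j) (p (S j))) /\
    (forall j, (j <= m)%nat -> at_most_zeroes Lam n (p j)).

Definition minus_one_stable (U : update_family) : Prop :=
  ~ exists X, In X U /\ forall x, In x X -> 0 < x.

(* Main.v *)
Require Import Defs.
From Stdlib Require Import ZArith List.
From Stdlib Require Import Lia Classical.
Import ListNotations.
Open Scope Z_scope.

Lemma last_time (P : nat -> Prop) (j : nat) : P 0%nat ->
  exists t, (t <= j)%nat /\ P t /\ forall u, (t < u <= j)%nat -> ~ P u.
Proof.
  intros H0. induction j as [|j IH].
  - exists 0%nat. split; [lia|]. split; auto. intros u Hu; lia.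
  - destruct (classic (P (S j))) as [HS|HS].
    + exists (S j). split; [lia|]. split; auto. intros u Hu; lia.
    + destruct IH as [t [Ht [Pt Hu]]]. exists t. split; [lia|]. split; auto.
      intros u Hu2. destruct (Nat.eq_dec u (S j)) as [->|Hne]; auto.
      apply Hu; lia.
Qed.

Lemma fold_max_ge : forall l x, In x l -> x <= fold_right Z.max 0 l.
Proof.
  induction l as [|a l IH]; simpl; intros x Hx; [contradiction|].
  destruct Hx as [->|Hx]; [lia|]. specialize (IH x Hx). lia.
Qed.

Lemma fold_max_nonneg : forall l, 0 <= fold_right Z.max 0 l.
Proof. induction l; simpl; lia. Qed.

Lemma range_set_ge X x : In x X -> Z.abs x <= range_of_set X.
Proof.
  intros Hx. unfold range_of_set. apply fold_max_ge.
  apply in_flat_map. exists x. split; [right; auto|].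
  replace (Z.abs x) with (Z.abs (x - 0)) by (f_equal; lia).
  apply (in_map (fun y => Z.abs (x - y))). left; reflexivity.
Qed.

Lemma range_r_ge U X : In X U -> range_of_set X <= range_r U.
Proof. intros HX. unfold range_r. apply fold_max_ge. apply in_map; auto. Qed.

Lemma neg_elem U (HU : is_update_family U) (Hstab : minus_one_stable U) :
  forall X, In X U -> exists x, In x X /\ - range_r U <= x <= -1.
Proof.
  intros X HX.
  destruct (classic (exists x, In x X /\ x <= 0)) as [[x [Hx Hle]]|Hn].
  - exists x. split; auto.
    assert (x <> 0) by (intro; subst; apply (proj2 (HU X HX)); auto).
    pose proof (range_set_ge X x Hx). pose proof (range_r_ge U X HX). lia.
  - exfalso. apply Hstab. exists X. split; auto. intros x Hx.
    destruct (Z_le_gt_dec x 0); [exfalso; apply Hn; eauto | lia].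
Qed.

Lemma flip_needs U Lam e e' z r :
  (forall X, In X U -> exists x, In x X /\ - r <= x <= -1) ->
  legal_move U Lam e e' -> Lam z -> e z <> e' z ->
  exists w, z - r <= w <= z - 1 /\ zero_ext Lam e w.
Proof.
  intros Hneg [Hc | [s [Hs [[Hfs Hfo] [X [HX Hz]]]]]] Hl Hne.
  - exfalso; apply Hne; apply Hc; auto.
  - destruct (Z.eq_dec z s) as [->|Hn].
    + destruct (Hneg X HX) as [x [Hx Hb]]. exists (s + x). split; [lia|]. apply Hz; auto.
    + exfalso; apply Hne. symmetry; apply Hfo; auto.
Qed.

Lemma others_same U Lam e e' z w :
  legal_move U Lam e e' -> Lam z -> e z <> e' z -> Lam w -> w <> z -> e' w = e w.
Proof.
  intros [Hc | [s [Hs [[Hfs Hfo] _]]]] Hl Hne Hw Hwz.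
  - exfalso; apply Hne; apply Hc; auto.
  - destruct (Z.eq_dec z s) as [->|Hn].
    + apply Hfo; auto.
    + exfalso; apply Hne. symmetry; apply Hfo; auto.
Qed.

Lemma legal_restrict U Lam Lam' e e' : (forall z, Lam' z -> Lam z) ->
  legal_move U Lam e e' -> legal_move U Lam' e e'.
Proof.
  intros Hsub [Hc | [s [Hs [[Hfs Hfo] [X [HX Hz]]]]]].
  - left; intros x Hx; apply Hc; auto.
  - destruct (classic (Lam' s)) as [Hs'|Hs'].
    + right; exists s; split; auto; split.
      * split; auto; intros; apply Hfo; auto.
      * exists X; split; auto; intros x Hx.
        destruct (Hz x Hx) as [[H1 H2]|H1].
        -- destruct (classic (Lam' (s+x))); [left; auto | right; auto].
        -- right; intro; apply H1; auto.
    + left; intros x Hx. symmetry. apply Hfo; auto. intro; subst; contradiction.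
Qed.

Lemma legal_rev U Lam e e' : (forall X, In X U -> ~ In 0 X) ->
  legal_move U Lam e e' -> legal_move U Lam e' e.
Proof.
  intros H0 [Hc | [s [Hs [[Hfs Hfo] [X [HX Hz]]]]]].
  - left; intros x Hx; symmetry; auto.
  - right; exists s; split; auto; split.
    + split.
      * rewrite Hfs; destruct (e s); reflexivity.
      * intros; symmetry; apply Hfo; auto.
    + exists X; split; auto; intros x Hx.
      destruct (Hz x Hx) as [[H1 H2]|H1]; [left | right; auto].
      split; auto. rewrite Hfo; auto.
      intro Heq. apply (H0 X HX). replace 0 with x by lia; auto.
Qed.

Lemma zeros_drop Lam Lam' k e z0 : (forall z, Lam' z -> Lam z) -> Lam z0 -> ~ Lam' z0 ->
  e z0 = false -> at_most_zeroes Lam (S k) e -> at_most_zeroes Lam' k e.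
Proof.
  intros Hsub Hz0 Hn Hf [l [Hl Hin]].
  exists (remove Z.eq_dec z0 l). split.
  - pose proof (remove_length_lt Z.eq_dec l z0 (Hin z0 Hz0 Hf)). lia.
  - intros x Hx Hex. apply in_in_remove.
    + intro; subst; contradiction.
    + apply Hin; auto.
Qed.

Fixpoint dd (r : Z) (n : nat) : Z :=
  match n with O => 0 | S k => 2 * dd r k + r end.

Lemma dd_nonneg r n : 0 <= r -> 0 <= dd r n.
Proof. intros Hr; induction n; cbn [dd]; lia. Qed.

Definition path_ok U Lam n (m : nat) (p : nat -> config) : Prop :=
  conf_eq Lam (p 0%nat) (fun _ => true) /\
  (forall j, (j < m)%nat -> legal_move U Lam (p j) (p (S j))) /\
  (forall j, (j <= m)%nat -> at_most_zeroes Lam n (p j)).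

Definition Tprop U r n := forall Lam m p, path_ok U Lam n m p ->
  forall y, (forall z, y - dd r n <= z <= y -> Lam z) ->
  forall j, (j <= m)%nat -> p j y = true.

Lemma T0 U r : Tprop U r 0.
Proof.
  intros Lam m p [H0 [Hl Hz]] y Hy j Hj.
  destruct (Hz j Hj) as [l [Hlen Hin]].
  destruct (p j y) eqn:E; auto.
  assert (l = []) by (destruct l; simpl in *; auto; lia). subst.
  exfalso. apply (Hin y); auto. apply Hy. simpl; lia.
Qed.

Lemma A_step U r k (Hr : 0 <= r)
  (Hneg : forall X, In X U -> exists x, In x X /\ - r <= x <= -1)
  (H0 : forall X, In X U -> ~ In 0 X)
  (IH : Tprop U r k) :
  forall Lam m p, path_ok U Lam (S k) m p ->
  forall a y, a + dd r k + r <= y -> (forall z, a <= z <= y -> Lam z) ->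
  forall j, (j <= m)%nat ->
  (forall z, a <= z <= a + dd r k + r - 1 -> p j z = true) -> p j y = true.
Proof.
  intros Lam m p [Hp0 [Hleg Hzer]] a y Hay Hlam j Hj HL.
  pose proof (dd_nonneg r k Hr) as Hd.
  destruct (p j y) eqn:Ey; auto. exfalso.
  set (P := fun t => forall z, a + dd r k + r <= z <= y -> p t z = true).
  assert (HP0 : P 0%nat).
  { intros z Hz. rewrite (Hp0 z); auto. apply Hlam; lia. }
  destruct (last_time P j HP0) as [ka [Hka [Pka Hafter]]].
  assert (Hkj : ka <> j) by (intro; subst; rewrite (Pka y) in Ey; [discriminate|lia]).
  assert (HnP : forall t, (ka < t <= j)%nat -> exists z, a + dd r k + r <= z <= y /\ p t z = false).
  { intros t Ht. pose proof (Hafter t Ht) as Hn.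
    apply NNPP; intro Hc; apply Hn; intros z Hz.
    destruct (p t z) eqn:E; auto. exfalso; apply Hc; eauto. }
  destruct (HnP (S ka) ltac:(lia)) as [z [Hz Hfz]].
  assert (Hleg1 : legal_move U Lam (p ka) (p (S ka))) by (apply Hleg; lia).
  assert (Hne : p ka z <> p (S ka) z) by (rewrite Pka, Hfz; auto; discriminate).
  destruct (flip_needs U Lam _ _ z r Hneg Hleg1 ltac:(apply Hlam; lia) Hne)
    as [w [Hw Hzw]].
  assert (Hpw : p ka w = false).
  { destruct Hzw as [[_ Hf]|Hn]; auto. exfalso; apply Hn; apply Hlam; lia. }
  assert (Hwl : w <= a + dd r k + r - 1).
  { destruct (Z_le_gt_dec w (a + dd r k + r - 1)); auto.
    rewrite Pka in Hpw; [discriminate|lia]. }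
  assert (Hpw1 : p (S ka) w = false).
  { rewrite (others_same U Lam _ _ z w Hleg1); auto; try (apply Hlam; lia); lia. }
  assert (Hj2 : j <> S ka) by (intro; subst; rewrite HL in Hpw1; [discriminate|lia]).
  set (Lam2 := fun z => Lam z /\ ~ (a + dd r k + r <= z <= y) /\ p j z = true).
  set (q := fun i => p (j - i)%nat).
  assert (Hpath : path_ok U Lam2 k (j - ka - 1) q).
  { split; [|split].
    - intros x [_ [_ Hx]]. unfold q. rewrite Nat.sub_0_r. auto.
    - intros i Hi. unfold q.
      replace (j - i)%nat with (S (j - S i)) by lia.
      apply legal_restrict with (Lam := Lam); [intros x [Hx _]; auto|].
      apply legal_rev; auto. apply Hleg; lia.
    - intros i Hi. unfold q.
      destruct (HnP (j - i)%nat ltac:(lia)) as [z0 [Hz0 Hf0]].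
      apply zeros_drop with (Lam := Lam) (z0 := z0).
      + intros x [Hx _]; auto.
      + apply Hlam; lia.
      + intros [_ [Hc _]]; apply Hc; lia.
      + auto.
      + apply Hzer; lia. }
  pose proof (IH Lam2 _ q Hpath w) as HT.
  assert (Hq : q (j - ka - 1)%nat w = true).
  { apply HT; [|lia]. intros x Hx. unfold Lam2. split; [apply Hlam; lia|].
    split; [lia|]. apply HL; lia. }
  unfold q in Hq. replace (j - (j - ka - 1))%nat with (S ka) in Hq by lia.
  rewrite Hq in Hpw1; discriminate.
Qed.

Lemma T_step U r k (Hr : 0 <= r)
  (Hneg : forall X, In X U -> exists x, In x X /\ - r <= x <= -1)
  (H0 : forall X, In X U -> ~ In 0 X)
  (IH : Tprop U r k) : Tprop U r (S k).
Proof.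
  intros Lam m p Hpath y Hy j Hj.
  pose proof (A_step U r k Hr Hneg H0 IH Lam m p Hpath) as HA.
  destruct Hpath as [Hp0 [Hleg Hzer]].
  pose proof (dd_nonneg r k Hr) as Hd. cbn [dd] in Hy.
  set (a := y - (2 * dd r k + r)).
  set (Q := fun t => forall z, a <= z <= a + dd r k + r - 1 -> p t z = true).
  assert (HQ0 : Q 0%nat).
  { intros z Hz. rewrite (Hp0 z); auto. apply Hy; unfold a in *; lia. }
  destruct (last_time Q j HQ0) as [ta [Hta [Qta Hafter]]].
  assert (HR : forall z, a + dd r k + r <= z <= y -> p ta z = true).
  { intros z Hz. apply (HA a z); try lia.
    - intros x Hx; apply Hy; unfold a in *; lia.
    - exact Qta. }
  destruct (Nat.eq_dec ta j) as [->|Hne].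
  { apply HR; unfold a; lia. }
  assert (HnQ : forall t, (ta < t <= j)%nat -> exists z, a <= z <= a + dd r k + r - 1 /\ p t z = false).
  { intros t Ht. pose proof (Hafter t Ht) as Hn.
    apply NNPP; intro Hc; apply Hn; intros z Hz.
    destruct (p t z) eqn:E; auto. exfalso; apply Hc; eauto. }
  set (Lam2 := fun z => Lam z /\ ~ (a <= z <= a + dd r k + r - 1) /\ p ta z = true).
  set (q := fun i => p (ta + i)%nat).
  assert (Hp2 : path_ok U Lam2 k (j - ta) q).
  { split; [|split].
    - intros x [_ [_ Hx]]. unfold q. rewrite Nat.add_0_r. auto.
    - intros i Hi. unfold q. rewrite Nat.add_succ_r.
      apply legal_restrict with (Lam := Lam); [intros x [Hx _]; auto|].
      apply Hleg; lia.
    - intros i Hi. unfold q. destruct i as [|i].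
      + exists []. split; [simpl; lia|]. intros x [_ [_ Hx]] Hf.
        rewrite Nat.add_0_r in Hf. rewrite Hx in Hf; discriminate.
      + destruct (HnQ (ta + S i)%nat ltac:(lia)) as [z0 [Hz0 Hf0]].
        apply zeros_drop with (Lam := Lam) (z0 := z0).
        * intros x [Hx _]; auto.
        * apply Hy; unfold a in *; lia.
        * intros [_ [Hc _]]; apply Hc; lia.
        * auto.
        * apply Hzer; lia. }
  pose proof (IH Lam2 _ q Hp2 y) as HT.
  assert (Hq : q (j - ta)%nat y = true).
  { apply HT; [|lia]. intros x Hx. unfold Lam2. split; [apply Hy; lia|].
    split; [unfold a; lia|]. apply HR; unfold a; lia. }
  unfold q in Hq. replace (ta + (j - ta))%nat with j in Hq by lia. exact Hq.
Qed.

Lemma T_all U r (Hr : 0 <= r)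
  (Hneg : forall X, In X U -> exists x, In x X /\ - r <= x <= -1)
  (H0 : forall X, In X U -> ~ In 0 X) : forall n, Tprop U r n.
Proof.
  induction n; [apply T0 | apply T_step; auto].
Qed.

Lemma dd_eq r n : dd r n = r * (2 ^ Z.of_nat n - 1).
Proof.
  induction n as [|n IH]; [simpl; ring|].
  cbn [dd]. rewrite IH. rewrite Nat2Z.inj_succ, Z.pow_succ_r by lia. ring.
Qed.

Theorem mainTheorem4 (U : update_family) (HU : is_update_family U)
  (Hstab : minus_one_stable U) (n : nat) (Lam : Z -> Prop)
  (HLam : forall x : Z,
      - range_r U * (2 ^ Z.of_nat n - 1) <= x <=
        range_r U * Z.of_nat n * 2 ^ (Z.of_nat n - 1) -> Lam x)
  (eta : config) (Heta : V U n Lam eta) :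
  eta 0 = true.
Proof.
  pose proof (fold_max_nonneg (map range_of_set U)) as Hr.
  fold (range_r U) in Hr.
  assert (Hpos : 0 <= range_r U * Z.of_nat n * 2 ^ (Z.of_nat n - 1)).
  { apply Z.mul_nonneg_nonneg; [apply Z.mul_nonneg_nonneg; lia|].
    apply Z.pow_nonneg; lia. }
  destruct Heta as [m [p [Hm [Hp0 [Hpm [Hleg Hzer]]]]]].
  assert (HT := T_all U (range_r U) Hr (neg_elem U HU Hstab)
                  (fun X HX => proj2 (HU X HX)) n Lam m p
                  (conj Hp0 (conj Hleg Hzer)) 0).
  assert (Hl0 : Lam 0).
  { apply HLam. split; [|lia].
    assert (0 <= 2 ^ Z.of_nat n - 1).
    { assert (0 < 2 ^ Z.of_nat n) by (apply Z.pow_pos_nonneg; lia). lia. }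
    nia. }
  rewrite <- (Hpm 0 Hl0). apply HT; [|lia].
  intros z Hz. apply HLam. rewrite dd_eq in Hz. lia.
Qed.
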